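(* Let $n,r$ be positive integers with $r^2\le n+r$. Then $k(n+r)\le k(n)+1$.
   Context: A system on $n$ elements is a triple $(\mathcal{F},w,s)$ where $\mathcal{F}=(F_1,\dots,F_m)$ is a collection of subsets of $[n]$, $w\in[0,1]^m$ with $\sum_i w_i=1$, and $s\in[0,1]^{m\times m\times n}$ with $\sum_p s_{ijp}=1$ for all $i,j$. It is intersecting if $s_{ijp}>0$ implies $p\in F_i\cap F_j$. It is balanced if for all $p\in[n]$, $\sum_{i,j} w_iw_js_{ijp}=1/n$. Its cardinality is the size of the largest set in $\mathcal{F}$. $k(n)$ is the minimum $k$ such that there exists a balanced intersecting system on $n$ elements with cardinality $k$. *)

(* Defs.v *)
From HB Require Import structures.
From mathcomp Require Import all_boot all_order all_algebra.
From mathcomp Require Import boolp Rstruct.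
Set Implicit Arguments. Unset Strict Implicit. Unset Printing Implicit Defensive.
Import Order.TTheory GRing.Theory Num.Theory.
Local Open Scope ring_scope.

Notation R := Rdefinitions.R.

Record system (n : nat) := System {
  sys_m : nat;
  sys_F : 'I_sys_m -> {set 'I_n};
  sys_w : 'I_sys_m -> R;
  sys_s : 'I_sys_m -> 'I_sys_m -> 'I_n -> R;
}.
Arguments sys_m {n} s.
Arguments sys_F {n} s i.
Arguments sys_w {n} s i.
Arguments sys_s {n} s i j p.

Definition is_system n (S : system n) : Prop :=
  (forall i, 0 <= sys_w S i <= 1) /\ (\sum_i sys_w S i = 1) /\
  (forall i j p, 0 <= sys_s S i j p <= 1) /\
  (forall i j, \sum_p sys_s S i j p = 1).

Definition intersecting n (S : system n) : Prop :=
  forall i j p, 0 < sys_s S i j p -> p \in sys_F S i :&: sys_F S j.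

Definition balanced n (S : system n) : Prop :=
  forall p : 'I_n,
    \sum_i \sum_j sys_w S i * sys_w S j * sys_s S i j p = (n%:R)^-1.

Definition cardinality n (S : system n) : nat := (\max_i #|sys_F S i|)%N.

Definition has_bis (n k : nat) : bool :=
  `[< exists S : system n, [/\ is_system S, intersecting S, balanced S
                             & cardinality S = k] >].

(* k(n) = least k admitting a balanced intersecting system on n elements
   with cardinality k (0 if none exists, which only happens for n = 0). *)
Definition kfun (n : nat) : nat :=
  match pselect (exists k, has_bis n k) with
  | left h => ex_minn h
  | right _ => 0%N
  end.

(* Main.v *)
Require Import Defs.
From mathcomp Require Import all_boot all_order all_algebra.
From mathcomp Require Import boolp Rstruct ring lra zify.
Set Implicit Arguments. Unset Strict Implicit. Unset Printing Implicit Defensive.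
Import Order.TTheory GRing.Theory Num.Theory.

Local Open Scope ring_scope.

Lemma kfun_min N k : has_bis N k -> (kfun N <= k)%N.
Proof.
rewrite /kfun; case: pselect => [h|nh] H //.
by case: ex_minnP => m _; apply.
Qed.

Lemma kfun_spec N : (exists k, has_bis N k) -> has_bis N (kfun N).
Proof.
rewrite /kfun; case: pselect => [h|nh] H; [by case: ex_minnP | by case: nh].
Qed.

Definition triv (n : nat) : system n :=
  @System n 1 (fun _ => setT) (fun _ => 1) (fun _ _ _ => (n%:R)^-1).

Lemma triv_ok n : (0 < n)%N -> has_bis n (cardinality (triv n)).
Proof.
move=> n0; apply/asboolP; exists (triv n); split => //.
- split; [|split; [|split]] => /=.
  + by move=> _; rewrite ler01 lexx.
  + by rewrite big_ord1.
  + move=> _ _ _; rewrite invr_ge0 ler0n /= invf_le1 ?ler1n // ltr0n //.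
  + move=> _ _; rewrite sumr_const card_ord -[(_^-1) *+ n]mulr_natl mulfV // pnatr_eq0 -lt0n n0 //.
- by rewrite /intersecting => i j p _ /=; rewrite !inE.
- by rewrite /balanced => p /=; rewrite !big_ord1 !mul1r.
Qed.

Section Ext.
Variables (n r : nat) (S : system n).
Local Notation m := (sys_m S).
Local Notation T := ('I_m * 'I_r)%type.

Definition al : R := (r ^ 2)%:R / (n + r)%:R.
Definition cc (t u : 'I_r) : R := if t == u then 1 - al else 1.
Definition We (x : T) : R := sys_w S x.1 / r%:R.
Definition Se (x y : T) (p : 'I_(n + r)) : R :=
  match split p with
  | inl p0 => cc x.2 y.2 * sys_s S x.1 y.1 p0
  | inr v => if (x.2 == v) && (y.2 == v) then al else 0
  end.
Definition Fe (x : T) : {set 'I_(n + r)} :=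
  (lshift r @: sys_F S x.1) :|: [set rshift n x.2].

Definition ext : system (n + r) :=
  @System (n + r) #|{: T}| (fun k => Fe (enum_val k)) (fun k => We (enum_val k))
    (fun k l p => Se (enum_val k) (enum_val l) p).
End Ext.

Lemma sum_enum (T : finType) (g : T -> R) :
  \sum_(k < #|T|) g (enum_val k) = \sum_x g x.
Proof. by rewrite [RHS](reindex (@enum_val T predT)) //; apply: onW_bij; apply: enum_val_bij. Qed.

Lemma max_enum (T : finType) (g : T -> nat) :
  (\max_(k < #|T|) g (enum_val k) = \max_x g x)%N.
Proof. by rewrite [RHS](reindex (@enum_val T predT)) //; apply: onW_bij; apply: enum_val_bij. Qed.

Lemma sum2_enum (T : finType) (g : T -> T -> R) :
  \sum_(k < #|T|) \sum_(l < #|T|) g (enum_val k) (enum_val l) = \sum_x \sum_y g x y.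
Proof.
rewrite -(sum_enum (fun x => \sum_y g x y)); apply: eq_bigr => k _; exact: (sum_enum (g (enum_val k))).
Qed.

Lemma sum_pair_factor (I J : finType) (A : I -> I -> R) (B : J -> J -> R) :
  \sum_(x : I * J) \sum_(y : I * J) A x.1 y.1 * B x.2 y.2 =
  (\sum_i \sum_j A i j) * (\sum_t \sum_u B t u).
Proof.
rewrite -(pair_bigA _ (fun i t => \sum_(y : I * J) A i y.1 * B t y.2)) /=.
rewrite mulr_suml; apply: eq_bigr => i _.
rewrite mulr_suml.
under eq_bigr do rewrite -(pair_bigA _ (fun j u => A i j * B _ u)) /=.
rewrite exchange_big /=; apply: eq_bigr => j _.
rewrite mulr_sumr; apply: eq_bigr => t _.
by rewrite mulr_sumr.
Qed.

Lemma split_l (n r : nat) (p : 'I_n) : split (lshift r p) = inl p.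
Proof. exact: (unsplitK (inl p)). Qed.
Lemma split_r (n r : nat) (v : 'I_r) : split (rshift n v) = inr v.
Proof. exact: (unsplitK (inr v)). Qed.

Lemma al_ge0 n r : 0 <= al n r.
Proof. by rewrite /al divr_ge0 ?ler0n. Qed.

Lemma al_le1 n r : (0 < n)%N -> (r ^ 2 <= n + r)%N -> al n r <= 1.
Proof.
move=> n0 h; rewrite /al ler_pdivrMr ?mul1r ?ler_nat // ltr0n; lia.
Qed.

Lemma cc_sum n r (t : 'I_r) : \sum_u cc n t u = r%:R - al n r.
Proof.
transitivity (\sum_(u < r) (1 - (if u == t then al n r else 0))).
  by apply: eq_bigr => u _; rewrite /cc eq_sym; case: eqP => _; rewrite ?subr0.
rewrite sumrB sumr_const card_ord -big_mkcond /= big_pred1_eq //.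
Qed.

Lemma m_pos n (S : system n) : is_system S -> (0 < sys_m S)%N.
Proof.
case=> _ [hw _]; rewrite lt0n; apply/negP => /eqP m0.
move: hw; rewrite big1 ?m0 //; last by move=> i; have := ltn_ord i; rewrite {2}m0.
by move/eqP; rewrite eq_sym oner_eq0.
Qed.

Lemma ext_system n r (S : system n) : (0 < n)%N -> (0 < r)%N -> (r ^ 2 <= n + r)%N ->
  is_system S -> is_system (ext r S).
Proof.
move=> n0 r0 hr [hw [sw [hs ss]]].
have rpos : 0 < r%:R :> R by rewrite ltr0n.
have a0 := al_ge0 n r; have a1 := al_le1 n0 hr.
split; [|split; [|split]] => /=.
- move=> k; rewrite /We; have [w0 w1] := andP (hw (enum_val k).1).
  rewrite divr_ge0 ?ler0n //= ler_pdivrMr // mul1r.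
  apply: le_trans w1 _; by rewrite ler1n.
- rewrite (sum_enum (fun x : 'I_(sys_m S) * 'I_r => We x)) /We.
  rewrite -(pair_bigA _ (fun i (t : 'I_r) => sys_w S i / r%:R)) /= -[RHS]sw.
  apply: eq_bigr => i _; rewrite sumr_const card_ord -[(_ / _) *+ r]mulr_natr.
  by rewrite divfK // gt_eqF.
- move=> k l p; rewrite /Se -(splitK p); case: (split p) => [p0|v] /=.
  + rewrite split_l; have [s0 s1] := andP (hs (enum_val k).1 (enum_val l).1 p0).
    have /andP [c0 c1] : 0 <= cc n (enum_val k).2 (enum_val l).2 <= 1.
      by rewrite /cc; case: eqP => _; apply/andP; split; lra.
    by rewrite mulr_ge0 //= mulr_ile1.
  + rewrite split_r; case: ifP => _; apply/andP; split; lra.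
- move=> k l; rewrite big_split_ord /=.
  under eq_bigr do rewrite /Se split_l.
  under [X in _ + X]eq_bigr do rewrite /Se split_r.
  rewrite -mulr_sumr ss mulr1.
  set t := (enum_val k).2; set u := (enum_val l).2.
  have -> : \sum_(v < r) (if (t == v) && (u == v) then al n r else 0) =
            if t == u then al n r else 0.
    case: (eqVneq t u) => [<-|ne].
      under eq_bigr do rewrite andbb.
      by rewrite -big_mkcond /= (big_pred1 t) // => v; rewrite /= eq_sym.
    rewrite big1 // => v _; case: (eqVneq t v) => [ev|] //=.
    by rewrite -ev eq_sym (negbTE ne).
  by rewrite /cc; case: eqP => _; ring.
Qed.

Lemma ext_inter n r (S : system n) : (0 < n)%N -> (r ^ 2 <= n + r)%N ->
  is_system S -> intersecting S -> intersecting (ext r S).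
Proof.
move=> n0 hr [_ [_ [hs _]]] hI; rewrite /intersecting => k l p /=.
rewrite /Se /Fe -(splitK p); case: (split p) => [p0|v] /=.
- rewrite split_l => hpos.
  have /andP [s0 _] := hs (enum_val k).1 (enum_val l).1 p0.
  have /andP [c0 _] : 0 <= cc n (enum_val k).2 (enum_val l).2 <= 1.
    have a0 := al_ge0 n r; have a1 := al_le1 n0 hr.
    by rewrite /cc; case: eqP => _; apply/andP; split; lra.
  have sp : 0 < sys_s S (enum_val k).1 (enum_val l).1 p0.
    rewrite lt_neqAle s0 andbT; apply/eqP => e; move: hpos; rewrite -e mulr0 ltxx //.
  have := hI _ _ _ sp; rewrite !inE => /andP [h1 h2].
  by rewrite !(imset_f (lshift r)).
- rewrite split_r; case: ifP => [/andP [/eqP e1 /eqP e2] _|]; last by rewrite ltxx.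
  by rewrite !inE e1 e2 eqxx !orbT.
Qed.

Lemma ext_bal n r (S : system n) : (0 < n)%N -> (0 < r)%N ->
  is_system S -> balanced S -> balanced (ext r S).
Proof.
move=> n0 r0 [_ [sw _]] hB; rewrite /balanced => p /=.
have rne : r%:R != 0 :> R by rewrite pnatr_eq0 -lt0n.
have nne : n%:R != 0 :> R by rewrite pnatr_eq0 -lt0n.
have nrne : n%:R + r%:R != 0 :> R.
  by rewrite -natrD pnatr_eq0 -lt0n addn_gt0 n0.
rewrite (sum2_enum (fun x y => We x * We y * Se x y p)).
rewrite -(splitK p); case: (split p) => [p0|v] /=.
- under eq_bigr do under eq_bigr do rewrite /Se split_l.
  rewrite (eq_bigr (fun x => \sum_y
     (sys_w S x.1 * sys_w S y.1 * sys_s S x.1 y.1 p0) * (cc n x.2 y.2 / r%:R / r%:R))); last first.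
    by move=> x _; apply: eq_bigr => y _; rewrite /We; field.
  rewrite (sum_pair_factor (fun i j => sys_w S i * sys_w S j * sys_s S i j p0)
            (fun t u => cc n t u / r%:R / r%:R)) hB.
  under [X in _ * X]eq_bigr do rewrite -mulr_suml -mulr_suml cc_sum.
  rewrite sumr_const card_ord -[(_ / _) *+ r]mulr_natr /al natrD natrX.
  by field; rewrite nrne nne rne.
- under eq_bigr do under eq_bigr do rewrite /Se split_r.
  rewrite (eq_bigr (fun x => \sum_y
     (sys_w S x.1 * sys_w S y.1) * (if (x.2 == v) && (y.2 == v) then al n r / r%:R / r%:R else 0))); last first.
    by move=> x _; apply: eq_bigr => y _; rewrite /We; case: ifP => _; field.
  rewrite (sum_pair_factor (fun i j => sys_w S i * sys_w S j)
            (fun t u => if (t == v) && (u == v) then al n r / r%:R / r%:R else 0)).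
  under eq_bigr do rewrite -mulr_sumr.
  rewrite -mulr_suml sw mul1r mul1r.
  rewrite (pair_bigA _ (fun t u => if (t == v) && (u == v) then al n r / r%:R / r%:R else 0)) /=.
  rewrite -big_mkcond /= (big_pred1 (v, v)) //.
  by rewrite /al natrD natrX; field; rewrite nrne rne.
Qed.

Lemma ext_card n r (S : system n) : (0 < r)%N -> is_system S ->
  cardinality (ext r S) = (cardinality S + 1)%N.
Proof.
move=> r0 hS; rewrite /cardinality /=.
rewrite (max_enum (fun x : 'I_(sys_m S) * 'I_r => #|Fe x|)).
have cF : forall x : 'I_(sys_m S) * 'I_r, #|Fe x| = (#|sys_F S x.1| + 1)%N.
  move=> x; rewrite /Fe setUC cardsU1 card_imset; last exact: lshift_inj.
  have -> : rshift n x.2 \notin lshift r @: sys_F S x.1.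
    apply/imsetP => -[p0 _ /(congr1 val) /=] e.
    by have := ltn_ord p0; rewrite -e; lia.
  by rewrite addnC.
apply/eqP; rewrite eqn_leq; apply/andP; split.
- apply/bigmax_leqP => x _; rewrite cF leq_add2r; exact: leq_bigmax.
- have [i0 ->] := bigop.eq_bigmax (fun i => #|sys_F S i|) (ltac:(rewrite card_ord; exact: m_pos hS)).
  by rewrite -(cF (i0, Ordinal r0)); exact: leq_bigmax.
Qed.

Theorem lemma3 (n r : nat) : (0 < n)%N -> (0 < r)%N -> (r ^ 2 <= n + r)%N ->
  (kfun (n + r) <= kfun n + 1)%N.
Proof.
move=> n0 r0 hr.
have : has_bis n (kfun n) by apply: kfun_spec; exists (cardinality (triv n)); exact: triv_ok.
move/asboolP => [S [hS hI hB hc]].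
apply: kfun_min; apply/asboolP; exists (ext r S); split.
- exact: ext_system.
- exact: ext_inter.
- exact: ext_bal.
- by rewrite ext_card // hc.
Qed.
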